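(* Let $(K,R,V)$ be a finite transitive Kripke tree with clusters, $A$ a modal formula, and $t$ a translation for $A$ based on a sequence $Q=\{q_i\}_{i=0}^\infty$ of atoms not occurring in $A$. Then there is a finite transitive irreflexive Kripke model $(K',R',V')$ such that for every node $k\in K$ there is a node $k'\in K'$ such that if $k\vDash A$ then $k'\vDash A^t$.
   Context: Modal formulas are built from atoms and $\bot$ using $\wedge,\vee,\to,\neg,\Box$. A finite transitive Kripke tree with clusters is a finite Kripke model with transitive accessibility relation $R$ whose clusters (maximal sets of mutually accessible nodes, or single irreflexive nodes) are ordered by $R$ as a tree; each cluster is either a single irreflexive node or a set of reflexive nodes. A translation $t$ for $A$ based on $Q$ is an assignment of natural numbers to the occurrences of $\Box$ in $A$ such that the number assigned to any box occurrence is greater than the numbers assigned to all box occurrences within its scope. $A^t$ is defined by: $p^t=p$ for atoms; $(B\circ C)^t=B^t\circ C^t$ for $\circ\in\{\wedge,\vee,\to\}$; $(\neg B)^t=\neg B^t$; $(\Box B)^t=\Box(\bigwedge_{i=0}^n q_i\to B^t)$ where $n$ is the number $t$ assigns to that box occurrence. *)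

(* Defs.v *)
From mathcomp Require Import all_boot.
Set Implicit Arguments. Unset Strict Implicit. Unset Printing Implicit Defensive.

Inductive form : Type :=
| Atom : nat -> form
| Bot : form
| And : form -> form -> form
| Or : form -> form -> form
| Imp : form -> form -> form
| Neg : form -> form
| Box : form -> form.

(* A formula together with a translation t: every occurrence of Box carries
   the natural number t assigns to it. *)
Inductive tform : Type :=
| TAtom : nat -> tform
| TBot : tform
| TAnd : tform -> tform -> tform
| TOr : tform -> tform -> tform
| TImp : tform -> tform -> tform
| TNeg : tform -> tform
| TBox : nat -> tform -> tform.

Fixpoint erase (t : tform) : form :=
  match t with
  | TAtom p => Atom p
  | TBot => Bot
  | TAnd a b => And (erase a) (erase b)
  | TOr a b => Or (erase a) (erase b)
  | TImp a b => Imp (erase a) (erase b)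
  | TNeg a => Neg (erase a)
  | TBox _ a => Box (erase a)
  end.

Fixpoint boxnums (t : tform) : seq nat :=
  match t with
  | TAtom _ | TBot => [::]
  | TAnd a b | TOr a b | TImp a b => boxnums a ++ boxnums b
  | TNeg a => boxnums a
  | TBox n a => n :: boxnums a
  end.

Fixpoint valid_numbering (t : tform) : Prop :=
  match t with
  | TAtom _ | TBot => True
  | TAnd a b | TOr a b | TImp a b => valid_numbering a /\ valid_numbering b
  | TNeg a => valid_numbering a
  | TBox n a => (forall m, m \in boxnums a -> m < n) /\ valid_numbering a
  end.

Definition translation_for (t : tform) (A : form) : Prop :=
  erase t = A /\ valid_numbering t.

Fixpoint conjQ (q : nat -> nat) (n : nat) : form :=
  match n with
  | 0 => Atom (q 0)
  | n'.+1 => And (conjQ q n') (Atom (q n'.+1))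
  end.

Fixpoint trans (q : nat -> nat) (t : tform) : form :=
  match t with
  | TAtom p => Atom p
  | TBot => Bot
  | TAnd a b => And (trans q a) (trans q b)
  | TOr a b => Or (trans q a) (trans q b)
  | TImp a b => Imp (trans q a) (trans q b)
  | TNeg a => Neg (trans q a)
  | TBox n a => Box (Imp (conjQ q n) (trans q a))
  end.

Fixpoint occurs (p : nat) (A : form) : bool :=
  match A with
  | Atom r => r == p
  | Bot => false
  | And a b | Or a b | Imp a b => occurs p a || occurs p b
  | Neg a => occurs p a
  | Box a => occurs p a
  end.

Fixpoint sat {K : Type} (R : K -> K -> bool) (V : nat -> K -> bool)
    (k : K) (A : form) : Prop :=
  match A with
  | Atom p => V p k
  | Bot => False
  | And a b => sat R V k a /\ sat R V k b
  | Or a b => sat R V k a \/ sat R V k b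
  | Imp a b => sat R V k a -> sat R V k b
  | Neg a => ~ sat R V k a
  | Box a => forall j, R k j -> sat R V j a
  end.

Definition transitive_rel {K : Type} (R : K -> K -> bool) : Prop :=
  forall x y z, R x y -> R y z -> R x z.

Definition irreflexive_rel {K : Type} (R : K -> K -> bool) : Prop :=
  forall x, ~~ R x x.

(* Transitive R on a finite K whose clusters are ordered by R as a (rooted)
   tree: there is a root whose cluster sees every other node, and the
   R-predecessors of any node are linearly ordered (up to clusters).
   Clusters are maximal sets of mutually accessible nodes (automatically
   reflexive by transitivity) or single irreflexive nodes. *)
Definition tree_with_clusters {K : finType} (R : rel K) : Prop :=
  transitive_rel R /\
  (exists r : K, forall k, k = r \/ R r k) /\
  (forall x y z, R x z -> R y z -> [\/ R x y, R y x | x = y]).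

(* Main.v *)
Require Import Defs.
From mathcomp Require Import all_boot.
From Stdlib Require Import Setoid.

Section Constr.
Variables (K : finType) (R : rel K) (V : nat -> K -> bool) (q : nat -> nat) (N : nat).
Hypothesis qinj : injective q.

Definition K' := (K * 'I_N)%type.
Definition R' : rel K' := fun u v => R u.1 v.1 && (v.2 < u.2).
Definition V' (p : nat) (u : K') : bool :=
  if [exists m : 'I_N, q m == p] then [exists m : 'I_N, (q m == p) && (m < u.2)]
  else V p u.1.

Lemma Vq m u : m < N -> V' (q m) u = (m < u.2).
Proof.
move=> mN; rewrite /V'.
have -> : [exists m0 : 'I_N, q m0 == q m].
  by apply/existsP; exists (Ordinal mN).
apply/existsP/idP.
  by case=> m0 /andP [/eqP /qinj <-].
by move=> h; exists (Ordinal mN); rewrite eqxx h.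
Qed.

Lemma Vp p u : (forall m, q m != p) -> V' p u = V p u.1.
Proof.
move=> h; rewrite /V'; case: existsP => // [[m]]; by rewrite (negbTE (h m)).
Qed.

Lemma conjQP n u : n < N -> (sat R' V' u (conjQ q n) <-> n < u.2).
Proof.
elim: n => [|n IH] nN /=; first by rewrite Vq.
rewrite Vq //; have := IH (ltnW nN); case=> h1 h2.
split; first by case.
by move=> h; split=> //; apply: h2; apply: ltnW.
Qed.

Lemma main_eq (s : tform) : valid_numbering s ->
  (forall i, ~~ occurs (q i) (erase s)) ->
  forall (x : K) (i : 'I_N), (forall m, m \in boxnums s -> m.+1 < i) ->
  (sat R' V' (x, i) (trans q s) <-> sat R V x (erase s)).
Proof.
elim: s => [p||a IHa b IHb|a IHa b IHb|a IHa b IHb|a IHa|n a IHa] /=.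
- move=> _ hq x i _; rewrite Vp //; move=> m; have := hq m; by rewrite eq_sym.
- done.
- move=> [va vb] hq x i hb.
  have hqa : forall i, ~~ occurs (q i) (erase a) by move=> j; have := hq j; case: occurs.
  have hqb : forall i, ~~ occurs (q i) (erase b) by move=> j; have := hq j; rewrite negb_or; case/andP.
  rewrite IHa // ?IHb //; first by move=> m hm; apply: hb; rewrite mem_cat hm orbT.
  by move=> m hm; apply: hb; rewrite mem_cat hm.
- move=> [va vb] hq x i hb.
  have hqa : forall i, ~~ occurs (q i) (erase a) by move=> j; have := hq j; case: occurs.
  have hqb : forall i, ~~ occurs (q i) (erase b) by move=> j; have := hq j; rewrite negb_or; case/andP.
  rewrite IHa // ?IHb //; first by move=> m hm; apply: hb; rewrite mem_cat hm orbT.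
  by move=> m hm; apply: hb; rewrite mem_cat hm.
- move=> [va vb] hq x i hb.
  have hqa : forall i, ~~ occurs (q i) (erase a) by move=> j; have := hq j; case: occurs.
  have hqb : forall i, ~~ occurs (q i) (erase b) by move=> j; have := hq j; rewrite negb_or; case/andP.
  rewrite IHa // ?IHb //; first by move=> m hm; apply: hb; rewrite mem_cat hm orbT.
  by move=> m hm; apply: hb; rewrite mem_cat hm.
- move=> va hq x i hb; by rewrite IHa.
- move=> [lt va] hq x i hb.
  have hn : n.+1 < i by apply: hb; rewrite inE eqxx.
  have nN : n < N by apply: ltn_trans (ltn_ord i); apply: ltn_trans hn.
  split.
  + move=> H y Rxy.
    have jN : n.+1 < N by apply: ltn_trans (ltn_ord i).
    have := H (y, Ordinal jN); rewrite /R' /= Rxy hn => /(_ isT).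
    rewrite conjQP // => /(_ (ltnSn _)).
    by rewrite IHa //= => m /lt.
  + move=> H [y j] /andP [/= Rxy ji] /=.
    rewrite conjQP //= => nj.
    rewrite IHa //; first exact: H.
    by move=> m /lt mn; apply: leq_ltn_trans nj.
Qed.

End Constr.

Theorem lemma4p4 (K : finType) (R : rel K) (V : nat -> K -> bool)
    (A : form) (t : tform) (q : nat -> nat) :
  tree_with_clusters R ->
  injective q ->
  (forall i, ~~ occurs (q i) A) ->
  translation_for t A ->
  exists (K' : finType) (R' : rel K') (V' : nat -> K' -> bool),
    transitive_rel R' /\ irreflexive_rel R' /\
    forall k : K, exists k' : K', sat R V k A -> sat R' V' k' (trans q t).
Proof.
move=> [Rtr _] qinj hq [et vt].
set M := \max_(m <- boxnums t) m.
have iN : M.+2 < M.+3 by [].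
exists (@K' K M.+3), (@R' K R M.+3), (@V' K V q M.+3).
split.
  move=> [x i] [y j] [z l]; rewrite /R' /= => /andP [Rxy ji] /andP [Ryz lj].
  by rewrite (Rtr _ _ _ Rxy Ryz) (ltn_trans lj ji).
split; first by move=> [x i]; rewrite /R' /= ltnn andbF.
move=> k; exists (k, Ordinal iN) => H.
rewrite (@main_eq K R V q M.+3 qinj) //; first by rewrite et.
- by rewrite et.
- move=> m hm /=; rewrite ltnS ltnS; exact: leq_bigmax_seq.
Qed.
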